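(* Let $n=2m-1$ be odd, fix $\boldsymbol{\rho}^0\in\mathcal{P}_n$ and $\alpha\in(0,\infty)$, and let $\mathbf{R}\sim\mathrm{Mallows}(\boldsymbol{\rho}^0,\alpha)$ with the footrule distance. For $i=1,\dots,n$ let $o^0_i$ be the item with $\rho^0_{o^0_i}=i$. Then the rank $R_{o^0_m}$ of the middle-ranked item is symmetrically distributed about $m$, i.e., for all $k=1,\dots,m-1$, $$P(R_{o^0_m}=m-k\mid\boldsymbol{\rho}^0,\alpha)=P(R_{o^0_m}=m+k\mid\boldsymbol{\rho}^0,\alpha).$$
   Context: $\mathcal{P}_n$ denotes the set of permutations of $\{1,\dots,n\}$; a ranking $\mathbf{r}\in\mathcal{P}_n$ assigns rank $r_i$ to item $i$. The footrule distance is $d(\mathbf{r},\boldsymbol{\rho})=\sum_{i=1}^n|r_i-\rho_i|$. The Mallows distribution $\mathrm{Mallows}(\boldsymbol{\rho}^0,\alpha)$ on $\mathcal{P}_n$ has probability mass function $P(\mathbf{R}=\mathbf{r}\mid\boldsymbol{\rho}^0,\alpha)=\frac{1}{Z_n(\alpha)}\exp\{-\frac{\alpha}{n}d(\mathbf{r},\boldsymbol{\rho}^0)\}$ with normalizing constant $Z_n(\alpha)$. *)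

(* Defs.v *)
From mathcomp Require Import all_boot all_order all_algebra all_fingroup.
From mathcomp Require Import all_classical all_reals all_analysis.
Set Implicit Arguments. Unset Strict Implicit. Unset Printing Implicit Defensive.
Import Order.TTheory GRing.Theory Num.Theory.
Local Open Scope ring_scope.

(* A ranking r of P_n is a permutation s : {perm 'I_n}; item i (0-based index)
   receives rank r_i = (s i) + 1 in {1..n}. *)
Definition rank n (s : {perm 'I_n}) (i : 'I_n) : nat := (s i).+1.

Definition footrule n (r rho : {perm 'I_n}) : nat :=
  (\sum_(i < n) `|(rank r i)%:Z - (rank rho i)%:Z|%N)%N.

Definition mallowsZ (R : realType) n (rho0 : {perm 'I_n}) (alpha : R) : R :=
  \sum_(r : {perm 'I_n}) expR (- (alpha / n%:R) * (footrule r rho0)%:R).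

Definition mallows_pmf (R : realType) n (rho0 : {perm 'I_n}) (alpha : R)
  (r : {perm 'I_n}) : R :=
  expR (- (alpha / n%:R) * (footrule r rho0)%:R) / mallowsZ rho0 alpha.

Definition mallows_prob (R : realType) n (rho0 : {perm 'I_n}) (alpha : R)
  (A : pred {perm 'I_n}) : R :=
  \sum_(r : {perm 'I_n} | A r) mallows_pmf rho0 alpha r.

(* o^0_j : the item whose rank under rho0 is j (j in 1..n), i.e. rho0^{-1}(j-1) *)
Definition item_of_rank n (rho0 : {perm 'I_n}) (j : 'I_n) : 'I_n := (rho0^-1)%g j.

(* Main.v *)
Require Import Defs.
From mathcomp Require Import all_boot all_order all_algebra all_fingroup.
From mathcomp Require Import all_classical all_reals all_analysis.
From mathcomp Require Import zify.
Import Order.TTheory GRing.Theory Num.Theory.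
Local Open Scope ring_scope.

Section Aux.
Variable n : nat.
Definition revp : {perm 'I_n} := perm (@rev_ord_inj n).
Lemma revpE i : revp i = rev_ord i. Proof. by rewrite permE. Qed.
Lemma revpK : involutive revp.
Proof. by move=> i; rewrite !revpE rev_ordK. Qed.
Definition sig0 (rho0 : {perm 'I_n}) : {perm 'I_n} := (rho0 * revp * rho0^-1)%g.
Lemma sig0E rho0 i : sig0 rho0 i = (rho0^-1)%g (rev_ord (rho0 i)).
Proof. by rewrite /sig0 !permM revpE. Qed.
Lemma sig0K rho0 : involutive (sig0 rho0).
Proof. by move=> i; rewrite !sig0E permKV rev_ordK permK. Qed.
Definition phi rho0 (r : {perm 'I_n}) : {perm 'I_n} := (sig0 rho0 * r * revp)%g.
Lemma phiE rho0 r i : phi rho0 r i = rev_ord (r (sig0 rho0 i)).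
Proof. by rewrite /phi !permM revpE. Qed.
Lemma phiK rho0 : involutive (phi rho0).
Proof.
move=> r; apply/permP => i; rewrite !phiE sig0K.
by apply: val_inj => /=; have := ltn_ord (r i); lia.
Qed.
Lemma footrule_phi rho0 r : footrule (phi rho0 r) rho0 = footrule r rho0.
Proof.
rewrite /footrule (reindex_inj (can_inj (sig0K rho0))) /=.
apply: eq_bigr => i _; rewrite /rank phiE sig0K sig0E permKV /=.
have := ltn_ord (r i); have := ltn_ord (rho0 i); lia.
Qed.
End Aux.

Theorem mainTheorem3 (R : realType) (m : nat) (hm : (0 < m)%N)
  (rho0 : {perm 'I_(2 * m - 1)}) (alpha : R) (halpha : 0 < alpha)
  (mid : 'I_(2 * m - 1)) (hmid : rank rho0 (item_of_rank rho0 mid) = m) :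
  forall k : nat, (1 <= k <= m - 1)%N ->
    mallows_prob rho0 alpha
      (fun r => rank r (item_of_rank rho0 mid) == (m - k)%N) =
    mallows_prob rho0 alpha
      (fun r => rank r (item_of_rank rho0 mid) == (m + k)%N).
Proof.
move=> k hk.
rewrite /mallows_prob [RHS](reindex_inj (can_inj (@phiK _ rho0))) /=.
apply: eq_big => [r|r _]; last by rewrite /mallows_pmf footrule_phi.
set o := item_of_rank rho0 mid.
have ho : sig0 _ rho0 o = o.
  rewrite sig0E /o /item_of_rank permKV; apply: (can_inj (permK rho0)).
  rewrite permKV; apply: val_inj => /=; rewrite permKV.
  move: hmid; rewrite /rank /item_of_rank permKV => hmid'.
  clear -hmid'; have := ltn_ord mid; lia.
rewrite /rank phiE ho /=.
have := ltn_ord (r o); clear -hk; move: (nat_of_ord (r o)) => x hx.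
by apply/eqP/eqP; lia.
Qed.
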